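(* Let $A=(a_{ij})\in\mathbb{R}^{n\times n}$ ($n\ge2$) be pseudo-diagonalizable and suppose there exists $k\in[n]$ such that $a_{kk}\ge0$ and $a_{ii}\le0$ for all $i\ne k$. Then $\lambda(A)=a_{kk}$ and $V(A)=\{\alpha\otimes A_k:\alpha\in\overline{\mathbb{R}}\}$, where $A_k$ is the $k$-th column of $A$.
   Context: Max-plus conventions: $\overline{\mathbb{R}}=\mathbb{R}\cup\{-\infty\}$, $\varepsilon=-\infty$, $\oplus=\max$, $\otimes=+$; $(A\otimes x)_i=\max_j(A_{ij}+x_j)$, $(\alpha\otimes x)_i=\alpha+x_i$. A matrix $P$ is invertible iff it has exactly one real entry in each row and column (others $\varepsilon$); $A,B$ are similar if $B=P^{-1}\otimes A\otimes P$ for invertible $P$. Pseudo-diagonal: real diagonal entries, off-diagonal entries equal to real $0$; pseudo-diagonalizable: similar to a pseudo-diagonal matrix. For finite $A$, $\lambda(A)$ is the maximum cycle mean $\max\{(a_{i_1i_2}+\dots+a_{i_{m-1}i_m}+a_{i_mi_1})/m\}$ over $m\ge1$ and distinct $i_1,\dots,i_m\in[n]$, which is the unique max-plus eigenvalue of $A$; $V(A)=\{x\in\overline{\mathbb{R}}^n: A\otimes x=\lambda(A)\otimes x\}$ is the eigenspace (containing the all-$\varepsilon$ vector). *)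

(* Defs.v *)
(* Max-plus algebra over R-bar = option R (None = epsilon = -oo). *)
From mathcomp Require Import all_boot all_order all_algebra.
From mathcomp Require Import reals.
Set Implicit Arguments. Unset Strict Implicit. Unset Printing Implicit Defensive.
Import Order.TTheory GRing.Theory Num.Theory.
Local Open Scope ring_scope.

Section MaxPlus.
Variable R : realType.

Definition mp_oplus (a b : option R) : option R :=
  match a, b with
  | None, y => y
  | x, None => x
  | Some x, Some y => Some (Num.max x y)
  end.

Definition mp_otimes (a b : option R) : option R :=
  match a, b with
  | Some x, Some y => Some (x + y)
  | _, _ => None
  end.

Definition mp_mulmv n (A : 'M[option R]_n) (x : 'I_n -> option R) : 'I_n -> option R :=
  fun i => \big[mp_oplus/None]_(j < n) mp_otimes (A i j) (x j).

Definition mp_scale n (a : option R) (x : 'I_n -> option R) : 'I_n -> option R :=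
  fun i => mp_otimes a (x i).

Definition mp_mulmx n (A B : 'M[option R]_n) : 'M[option R]_n :=
  \matrix_(i, j) \big[mp_oplus/None]_(l < n) mp_otimes (A i l) (B l j).

Definition mp_id n : 'M[option R]_n :=
  \matrix_(i, j) (if i == j then Some 0 else None).

Definition mp_of n (A : 'M[R]_n) : 'M[option R]_n := map_mx Some A.

Definition mp_similar n (A B : 'M[option R]_n) : Prop :=
  exists P Q : 'M[option R]_n,
    mp_mulmx Q P = mp_id n /\ mp_mulmx P Q = mp_id n /\
    B = mp_mulmx (mp_mulmx Q A) P.

(* pseudo-diagonal: real diagonal entries, off-diagonal entries real 0 *)
Definition pseudo_diagonal n (D : 'M[R]_n) : Prop :=
  forall i j : 'I_n, i != j -> D i j = 0.

Definition pseudo_diagonalizable n (A : 'M[R]_n) : Prop :=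
  exists D : 'M[R]_n, pseudo_diagonal D /\ mp_similar (mp_of A) (mp_of D).

(* mean of the cycle (i_1 ... i_m): (a_{i1 i2} + ... + a_{im i1}) / m *)
Definition cycle_mean n (A : 'M[R]_n) (s : seq 'I_n) : R :=
  (\sum_(p <- zip s (rot 1 s)) A p.1 p.2) / (size s)%:R.

Definition cycle_means n (A : 'M[R]_n) : seq R :=
  flatten [seq [seq cycle_mean A (tval t) | t <- [seq t <- enum {: m.-tuple 'I_n} | uniq (tval t)]]
          | m <- iota 1 n].

(* maximum cycle mean (the list is nonempty as soon as n >= 1) *)
Definition mp_lambda n (A : 'M[R]_n) : R :=
  foldr Num.max (head 0 (cycle_means A)) (cycle_means A).

End MaxPlus.

Definition mp_in_eigenspace (R : realType) n (A : 'M[R]_n) (x : 'I_n -> option R) : Prop :=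
  mp_mulmv (mp_of A) x = mp_scale (Some (mp_lambda A)) x.

(* Main.v *)
From HB Require Import structures.
Require Import Defs.
From mathcomp Require Import all_boot all_order all_algebra.
From mathcomp Require Import reals.
From mathcomp Require Import lra.
From Stdlib Require Import FunctionalExtensionality.
Import Order.TTheory GRing.Theory Num.Theory.
Local Open Scope ring_scope.
Set Implicit Arguments. Unset Strict Implicit. Unset Printing Implicit Defensive.

Section Aux.
Variable R : realType.

Lemma oplusA : associative (@mp_oplus R).
Proof. by case=> [x|] [y|] [z|] //=; rewrite maxA. Qed.
Lemma oplusC : commutative (@mp_oplus R).
Proof. by case=> [x|] [y|] //=; rewrite maxC. Qed.
Lemma oplus0l : left_id None (@mp_oplus R).
Proof. by case. Qed.
HB.instance Definition _ := Monoid.isComLaw.Build (option R) None (@mp_oplus R) oplusA oplusC oplus0l.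

Definition ole (a b : option R) : Prop :=
  match a, b with None, _ => True | Some x, Some y => x <= y | Some _, None => False end.

Lemma big_only n (F : 'I_n -> option R) j0 :
  (forall j, j != j0 -> F j = None) -> \big[@mp_oplus R/None]_(j < n) F j = F j0.
Proof. move=> H; rewrite (bigD1 j0) //= big1 //; by case: (F j0). Qed.

Lemma big_ge n (F : 'I_n -> option R) j : ole (F j) (\big[@mp_oplus R/None]_(j < n) F j).
Proof.
rewrite (bigD1 j) //=; set b := \big[_/_]_(_ | _) _.
case: (F j) => [x|] //=; case: b => [y|] //=; by rewrite le_max lexx.
Qed.

Lemma big_cases n (F : 'I_n -> option R) :
  \big[@mp_oplus R/None]_(j < n) F j = None \/
  exists j, \big[@mp_oplus R/None]_(j < n) F j = F j.
Proof.
elim/big_rec: _ => [|i x _ [->|[j ->]]]; first by left.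
- by right; exists i; case: (F i).
- right; case E1: (F i) => [u|]; case E2: (F j) => [v|] /=.
  + rewrite /Order.max; case: ifP => _; [exists j|exists i]; by rewrite ?E1 ?E2.
  + by exists i.
  + by exists j.
  + by exists j.
Qed.

Lemma big_le n (F : 'I_n -> option R) y :
  (forall j, ole (F j) y) -> ole (\big[@mp_oplus R/None]_(j < n) F j) y.
Proof. by move=> H; case: (big_cases F) => [->|[j ->]]. Qed.

Lemma ole_anti a b : ole a b -> ole b a -> a = b.
Proof. by case: a => [x|]; case: b => [y|] //= h1 h2; congr Some; apply/le_anti/andP. Qed.

Lemma big_eqP n (F : 'I_n -> option R) y :
  \big[@mp_oplus R/None]_(j < n) F j = y <->
  (forall j, ole (F j) y) /\ (y = None \/ exists j, F j = y).
Proof.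
split.
- move<-; split; first exact: big_ge.
  by case: (big_cases F) => [->|[j ->]]; [left|right; exists j].
- move=> [H1 H2]; apply: ole_anti; first exact: big_le.
  by case: H2 => [->|[j <-]] //; exact: big_ge.
Qed.

Lemma otimesN (a : option R) : mp_otimes a None = None.
Proof. by case: a. Qed.

Lemma pd_struct n (A : 'M[R]_n) : pseudo_diagonalizable A ->
  exists c : 'I_n -> R, forall a b, a != b -> A a b = c a - c b.
Proof.
case=> D [HD [P [Q [HQP [HPQ HB]]]]].
have PQE: forall a b, \big[@mp_oplus R/None]_(l < n) mp_otimes (P a l) (Q l b)
   = if a == b then Some 0 else None.
  by move=> a b; move/matrixP: HPQ => /(_ a b); rewrite /mp_mulmx /mp_id !mxE.
have offPQ: forall a b l, a != b -> mp_otimes (P a l) (Q l b) = None.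
  move=> a b l ab; have := PQE a b; rewrite (negbTE ab) => /big_eqP [H _].
  by have := H l; case: (mp_otimes (P a l) (Q l b)) => [s []|].
have diag: forall a, exists j, exists p q, P a j = Some p /\ Q j a = Some q /\ p + q = 0.
  move=> a; have := PQE a a; rewrite eqxx => /big_eqP [_ [//|[j Hj]]]; exists j.
  move: Hj; case: (P a j) => [p|] //; case: (Q j a) => [q|] //= [Hpq].
  by exists p, q; do !split.
have [sig Hsig] := fin_all_exists diag.
exists (fun a => odflt 0 (P a (sig a))) => a b ab.
have [pa [qa [Pa [Qa Ha]]]] := Hsig a; have [pb [qb [Pb [Qb Hb]]]] := Hsig b.
rewrite Pa Pb /=.
have sab: sig a != sig b.
  apply/negP => /eqP E; have := offPQ a b (sig a) ab.
  rewrite Pa E Qb /=; discriminate.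
have HD0 := HD _ _ sab.
move/matrixP: HB => /(_ (sig a) (sig b)).
rewrite /mp_of !mxE HD0 /mp_mulmx.
rewrite (big_only (j0 := b)); last first.
  move=> m mb; have ->: P m (sig b) = None; last exact: otimesN.
  case E: (P m (sig b)) => [p|] //; have := offPQ m b (sig b) mb.
  rewrite E Qb /=; discriminate.
rewrite mxE (big_only (j0 := a)); last first.
  move=> l la; have ->: Q (sig a) l = None; last by [].
  case E: (Q (sig a) l) => [p|] //; have al : a != l by rewrite eq_sym.
  by have := offPQ a l (sig a) al; rewrite Pa E.
rewrite Qa Pb mxE /= => -[]; lra.
Qed.


Lemma foldr_le (s : seq R) a v : a <= v -> (forall y, y \in s -> y <= v) ->
  foldr Num.max a s <= v.
Proof.
elim: s => //= y s IH Ha Hs.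
rewrite ge_max Hs ?mem_head // IH // => z Hz; apply: Hs; by rewrite in_cons Hz orbT.
Qed.

Lemma foldr_ge (s : seq R) a y : y \in s -> y <= foldr Num.max a s.
Proof.
elim: s => //= z s IH; rewrite in_cons => /orP [/eqP ->|/IH h]; by rewrite le_max ?lexx // h orbT.
Qed.

Lemma lambda_eq n (A : 'M[R]_n) (k : 'I_n) (c : 'I_n -> R) :
  (forall a b, a != b -> A a b = c a - c b) -> 0 <= A k k ->
  (forall i, i != k -> A i i <= 0) -> mp_lambda A = A k k.
Proof.
move=> Hc Hk Hi.
have bound: forall s : seq 'I_n, (0 < size s)%N -> cycle_mean A s <= A k k.
  move=> s s0; rewrite /cycle_mean ler_pdivrMr ?ltr0n //.
  have E: \sum_(p <- zip s (rot 1 s)) (c p.1 - c p.2) = 0.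
    rewrite sumrB -(big_map (fun p => p.1) xpredT c) -(big_map (fun p => p.2) xpredT c).
    rewrite -/(unzip1 _) -/(unzip2 _) unzip1_zip ?size_rot // unzip2_zip ?size_rot //.
    have ->: \sum_(i <- rot 1 s) c i = \sum_(i <- s) c i by apply: perm_big; rewrite perm_rot.
    by rewrite subrr.

  apply: (le_trans (y := \sum_(p <- zip s (rot 1 s)) (c p.1 - c p.2 + A k k))).
    apply: ler_sum => p _; case: (eqVneq p.1 p.2) => [e|ne].
      rewrite -e subrr add0r; case: (eqVneq p.1 k) => [->|nk] //.
      exact: le_trans (Hi _ nk) Hk.
    by rewrite Hc // lerDl.
  rewrite big_split /= E add0r big_const_seq count_predT iter_addr_0 size_zip size_rot minnn.
  by rewrite mulr_natr.
have ub: forall y, y \in cycle_means A -> y <= A k k.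
  move=> y /flatten_mapP [m]; rewrite mem_iota => /andP [m1 _] /mapP [t _ ->].
  by apply: bound; rewrite size_tuple.
have n0 : (0 < n)%N := leq_ltn_trans (leq0n k) (ltn_ord k).
have mem : A k k \in cycle_means A.
  apply/flatten_mapP; exists 1%N; first by rewrite mem_iota leqnn add1n ltnS n0.
  apply/mapP; exists [tuple k]; first by rewrite mem_filter /= mem_enum.
  by rewrite /cycle_mean /= big_seq1 divr1.
have hd: head 0 (cycle_means A) <= A k k.
  by case E: (cycle_means A) => [|y s] //=; apply: ub; rewrite E mem_head.
rewrite /mp_lambda; apply/le_anti/andP; split; first exact: foldr_le.
exact: foldr_ge.
Qed.


Lemma eigen_char n (A : 'M[R]_n) (k : 'I_n) (c : 'I_n -> R) :
  (forall a b, a != b -> A a b = c a - c b) -> 0 <= A k k ->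
  (forall i, i != k -> A i i <= 0) -> forall x : 'I_n -> option R,
  (forall i, mp_mulmv (mp_of A) x i = mp_scale (Some (A k k)) x i) <->
  exists alpha, x = mp_scale alpha (fun i => Some (A i k)).
Proof.
move=> Hc Hk Hi x.
have mofE: forall i j, mp_of A i j = Some (A i j) by move=> i j; rewrite mxE.
split.
- move=> Heig.
  have H1: forall i j, ole (mp_otimes (Some (A i j)) (x j)) (mp_otimes (Some (A k k)) (x i)).
    move=> i j; have := Heig i; rewrite /mp_mulmv /mp_scale => /big_eqP [H _].
    by have := H j; rewrite mofE.
  have H2: forall i, mp_otimes (Some (A k k)) (x i) = None \/
      exists j, mp_otimes (Some (A i j)) (x j) = mp_otimes (Some (A k k)) (x i).
    move=> i; have := Heig i; rewrite /mp_mulmv /mp_scale => /big_eqP [_ [->|[j Hj]]].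
      by left.
    by right; exists j; rewrite -mofE.
  case Exk: (x k) => [uk|]; last first.
    exists None; apply: functional_extensionality => j; rewrite /mp_scale /=.
    by have := H1 k j; rewrite Exk; case: (x j) => [v []|].
  have xS: forall i, exists u, x i = Some u.
    move=> i; have := H1 i k; rewrite Exk; case: (x i) => [v|] /=; [by exists v | case].
  have [u Hu] := fin_all_exists xS.
  have I: forall i j, A i j + u j <= A k k + u i.
    by move=> i j; have := H1 i j; rewrite !Hu.
  have Ex: forall i, exists j, A i j + u j = A k k + u i.
    move=> i; case: (H2 i) => [|[j]]; rewrite !Hu //= => -[] e; by exists j.
  have Key: forall i, i != k -> u i = u k - A k k + A i k.
    move=> i ik; rewrite (Hc i k ik).
    have low: c i - c k + u k <= A k k + u i by have := I i k; rewrite Hc.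
    have := Hk; rewrite le_eqVlt => /predU1P [l0|lpos].
      have e1 : A k i = c k - c i by apply: Hc; rewrite eq_sym.
      have := I k i; rewrite e1 => h.
      lra.
    have noself: forall j, j != k -> A j j + u j = A k k + u j -> False.
      by move=> j jk e; have := Hi j jk; lra.
    have [m _ Hm] := @arg_maxP _ _ _ k xpredT (fun j => u j - c j) isT.
    have mk: m = k.
      apply/eqP; apply/negPn/negP => mk; case: (Ex m) => j e.
      case: (eqVneq j m) => [jm|jm].
        by rewrite jm in e; exact: noself m mk e.
      have e1 : A m j = c m - c j by apply: Hc; rewrite eq_sym.
      have h : u j - c j <= u m - c m := Hm j isT; rewrite /= e1 in e; lra.
    rewrite mk in Hm.
    case: (Ex i) => j e; case: (eqVneq j i) => [ji|ji].
      by rewrite ji in e; exfalso; exact: noself i ik e.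
    have e1 : A i j = c i - c j by apply: Hc; rewrite eq_sym.
    have h : u j - c j <= u k - c k := Hm j isT; rewrite /= e1 in e; lra.
  exists (Some (u k - A k k)); apply: functional_extensionality => i.
  rewrite /mp_scale Hu /=; congr Some.
  case: (eqVneq i k) => [->|ik]; first lra.
  by rewrite Key.
- move=> [alpha ->] i; rewrite /mp_mulmv /mp_scale; case: alpha => [a|] /=.
  + apply/big_eqP; split.
      move=> j; rewrite mofE /=.
      case: (eqVneq i k) => [ik|ik]; case: (eqVneq j k) => [jk|jk].
      * rewrite ik jk; lra.
      * rewrite ik; have e1 : A k j = c k - c j by apply: Hc; rewrite eq_sym.
        have e2 := Hc _ _ jk; lra.
      * rewrite jk; lra.
      * case: (eqVneq j i) => [ji|ji].
          by rewrite ji; have := Hi i ik; lra.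
        have e1 : A i j = c i - c j by apply: Hc; rewrite eq_sym.
        have e2 := Hc _ _ jk; have e3 := Hc _ _ ik; lra.
    by right; exists k; rewrite mofE /=; congr Some; lra.
  + apply/big_eqP; split; [by move=> j; rewrite otimesN | by left].
Qed.

End Aux.

Theorem corollary4p20 (R : realType) (n : nat) (A : 'M[R]_n) (k : 'I_n) :
  (2 <= n)%N ->
  pseudo_diagonalizable A ->
  0 <= A k k ->
  (forall i : 'I_n, i != k -> A i i <= 0) ->
  mp_lambda A = A k k /\
  (forall x : 'I_n -> option R,
     mp_in_eigenspace A x <->
     exists alpha : option R, x = mp_scale alpha (fun i => Some (A i k))).
Proof.
move=> n2 Hpd Hk Hi; have [c Hc] := pd_struct Hpd.
have Hl := lambda_eq Hc Hk Hi; split => // x.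
rewrite /mp_in_eigenspace Hl -(eigen_char Hc Hk Hi x).
split => [-> //|H]; exact: functional_extensionality.
Qed.
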